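(* Let $\mathcal{H}_A$ be a complex Hilbert space of finite dimension $d_A\ge 2$. Then the inequality $$N_{A:CB}\le N_{AC:B}+N_{AB:C}$$ holds for every pure state $|\psi\rangle\langle\psi|$ on $\mathcal{H}_A\otimes\mathcal{H}_B\otimes\mathcal{H}_C$, for all finite-dimensional complex Hilbert spaces $\mathcal{H}_B,\mathcal{H}_C$, if and only if $d_A=2$ (i.e. subsystem $A$ is a qubit).
   Context: For a bipartite state $\rho_{XY}$ on $\mathcal{H}_X\otimes\mathcal{H}_Y$, the negativity is $N_{X:Y}=\frac{\|\rho_{XY}^{T_X}\|_1-1}{2}$, where $\rho_{XY}^{T_X}$ is the partial transpose with respect to subsystem $X$ and $\|\sigma\|_1=\mathrm{Tr}\sqrt{\sigma^\dagger\sigma}$ is the trace norm. For a tripartite state, $N_{A:CB}$, $N_{AC:B}$, $N_{AB:C}$ denote the negativities of the state with respect to the bipartitions $A|BC$, $AC|B$ and $AB|C$ respectively. *)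

(* Defs.v *)
From HB Require Import structures.
From mathcomp Require Import all_boot all_order all_algebra.
From mathcomp Require Import complex mxtens reals.
From Stdlib Require Import ClassicalEpsilon.
Set Implicit Arguments. Unset Strict Implicit. Unset Printing Implicit Defensive.
Import Order.TTheory GRing.Theory Num.Theory.
Local Open Scope ring_scope.

Definition adjmx (C : numClosedFieldType) m n (A : 'M[C]_(m, n)) : 'M[C]_(n, m) :=
  \matrix_(i, j) (A j i)^*.

(* positive semidefinite: <x, P x> >= 0 for every x (over C this forces hermitian) *)
Definition psdmx (C : numClosedFieldType) n (P : 'M[C]_n) : Prop :=
  forall x : 'cV[C]_n, 0 <= (adjmx x *m P *m x) 0 0.

(* the (positive semidefinite) square root of a matrix: some PSD P with P*P = M
   (unique when M is PSD, which is the only case used) *)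
Definition mxsqrt (C : numClosedFieldType) n (M : 'M[C]_n) : 'M[C]_n :=
  epsilon (inhabits 0) (fun P : 'M[C]_n => psdmx P /\ P *m P = M).

Definition trace_norm (C : numClosedFieldType) n (S : 'M[C]_n) : C :=
  \tr (mxsqrt (adjmx S *m S)).

(* partial transpose w.r.t. the first factor X of H_X (x) H_Y = C^(m*n),
   with the standard Kronecker index (i,j) |-> i*n + j:
   (rho^{T_X})_{(i,j),(i',j')} = rho_{(i',j),(i,j')} *)
Definition ptransposeX (C : numClosedFieldType) m n (rho : 'M[C]_(m * n)) : 'M[C]_(m * n) :=
  \matrix_(u, v)
    rho (mxtens_index ((mxtens_unindex v).1, (mxtens_unindex u).2))
        (mxtens_index ((mxtens_unindex u).1, (mxtens_unindex v).2)).

Definition negativity (C : numClosedFieldType) m n (rho : 'M[C]_(m * n)) : C :=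
  (trace_norm (ptransposeX rho) - 1) / 2%:R.

Definition pure_dm (C : numClosedFieldType) n (v : 'cV[C]_n) : 'M[C]_n := v *m adjmx v.

Definition coefABC (C : numClosedFieldType) a b c (psi : 'cV[C]_(a * b * c))
  (i : 'I_a) (j : 'I_b) (k : 'I_c) : C :=
  psi (mxtens_index (mxtens_index (i, j), k)) 0.

Definition vec_A_CB (C : numClosedFieldType) a b c (psi : 'cV[C]_(a * b * c)) :
  'cV[C]_(a * (c * b)) :=
  \col_u coefABC psi (mxtens_unindex u).1
                     (mxtens_unindex (mxtens_unindex u).2).2
                     (mxtens_unindex (mxtens_unindex u).2).1.

Definition vec_AC_B (C : numClosedFieldType) a b c (psi : 'cV[C]_(a * b * c)) :
  'cV[C]_(a * c * b) :=
  \col_u coefABC psi (mxtens_unindex (mxtens_unindex u).1).1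
                     (mxtens_unindex u).2
                     (mxtens_unindex (mxtens_unindex u).1).2.

Definition vec_AB_C (C : numClosedFieldType) a b c (psi : 'cV[C]_(a * b * c)) :
  'cV[C]_(a * b * c) :=
  \col_u coefABC psi (mxtens_unindex (mxtens_unindex u).1).1
                     (mxtens_unindex (mxtens_unindex u).1).2
                     (mxtens_unindex u).2.

Definition N_A_CB (C : numClosedFieldType) a b c (psi : 'cV[C]_(a * b * c)) : C :=
  negativity (pure_dm (vec_A_CB psi)).
Definition N_AC_B (C : numClosedFieldType) a b c (psi : 'cV[C]_(a * b * c)) : C :=
  negativity (pure_dm (vec_AC_B psi)).
Definition N_AB_C (C : numClosedFieldType) a b c (psi : 'cV[C]_(a * b * c)) : C :=
  negativity (pure_dm (vec_AB_C psi)).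

Definition unit_vector (C : numClosedFieldType) n (v : 'cV[C]_n) : Prop :=
  (adjmx v *m v) 0 0 = 1.

(* Main.v *)
Require Import Defs.
From HB Require Import structures.
From mathcomp Require Import all_boot all_order all_algebra.
From mathcomp Require Import complex mxtens reals.
From Stdlib Require Import ClassicalEpsilon.
Set Implicit Arguments. Unset Strict Implicit. Unset Printing Implicit Defensive.
Import Order.TTheory GRing.Theory Num.Theory.
Local Open Scope ring_scope.
Import Num.Def.
From mathcomp Require Import ring zify.
Section Adj.
Variable C : numClosedFieldType.

Lemma adjmxE m n (A : 'M[C]_(m,n)) i j : adjmx A i j = (A j i)^*.
Proof. by rewrite mxE. Qed.

Lemma adjmxK m n (A : 'M[C]_(m,n)) : adjmx (adjmx A) = A.
Proof. by apply/matrixP=> i j; rewrite !mxE conjCK. Qed.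

Lemma adjmxM m n p (A : 'M[C]_(m,n)) (B : 'M[C]_(n,p)) :
  adjmx (A *m B) = adjmx B *m adjmx A.
Proof.
apply/matrixP=> i j; rewrite !mxE rmorph_sum; apply: eq_bigr=> k _.
by rewrite !mxE rmorphM mulrC.
Qed.

Lemma adjmxD m n (A B : 'M[C]_(m,n)) : adjmx (A + B) = adjmx A + adjmx B.
Proof. by apply/matrixP=> i j; rewrite !mxE rmorphD. Qed.

Lemma adjmxN m n (A : 'M[C]_(m,n)) : adjmx (- A) = - adjmx A.
Proof. by apply/matrixP=> i j; rewrite !mxE rmorphN. Qed.

Lemma adjmxB m n (A B : 'M[C]_(m,n)) : adjmx (A - B) = adjmx A - adjmx B.
Proof. by rewrite adjmxD adjmxN. Qed.

Lemma adjmxZ m n c (A : 'M[C]_(m,n)) : adjmx (c *: A) = c^* *: adjmx A.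
Proof. by apply/matrixP=> i j; rewrite !mxE rmorphM. Qed.

Lemma adjmx1 n : adjmx (1%:M : 'M[C]_n) = 1%:M.
Proof.
by apply/matrixP=> i j; rewrite !mxE eq_sym rmorph_nat.
Qed.

Lemma adjmx_diag n (d : 'rV[C]_n) : adjmx (diag_mx d) = diag_mx (map_mx conjC d).
Proof.
apply/matrixP=> i j; rewrite !mxE eq_sym.
by case: eqP => [->|_]; rewrite ?mulr1n ?mulr0n ?rmorph0.
Qed.

Lemma adjmx_tr m n (A : 'M[C]_(m,n)) : adjmx A = map_mx conjC (A ^T).
Proof. by apply/matrixP=> i j; rewrite !mxE. Qed.

Definition qf n (A : 'M[C]_n) (x : 'cV[C]_n) := (adjmx x *m A *m x) 0 0.

Lemma qfE n (A : 'M[C]_n) x :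
  qf A x = \sum_i \sum_j (x i 0)^* * A i j * x j 0.
Proof.
rewrite /qf mxE [RHS]exchange_big /=; apply: eq_bigr => j _; rewrite mxE mulr_suml.
by apply: eq_bigr => i _; rewrite !mxE.
Qed.

Lemma psd_gram m n (Z : 'M[C]_(m,n)) : psdmx (Z *m adjmx Z).
Proof.
move=> x; set y := adjmx Z *m x.
have -> : adjmx x *m (Z *m adjmx Z) *m x = adjmx y *m y.
  by rewrite /y adjmxM adjmxK !mulmxA.
rewrite mxE; apply: sumr_ge0 => k _; rewrite mxE mulrC; exact: mul_conjC_ge0.
Qed.

End Adj.

Section Psd.
Variable C : numClosedFieldType.

Definition bf n (A : 'M[C]_n) (x y : 'cV[C]_n) := (adjmx x *m A *m y) 0 0.

Lemma bfDl n (A : 'M[C]_n) x1 x2 y : bf A (x1 + x2) y = bf A x1 y + bf A x2 y.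
Proof. by rewrite /bf adjmxD !mulmxDl mxE. Qed.
Lemma bfDr n (A : 'M[C]_n) x y1 y2 : bf A x (y1 + y2) = bf A x y1 + bf A x y2.
Proof. by rewrite /bf mulmxDr mxE. Qed.
Lemma bfZl n (A : 'M[C]_n) c x y : bf A (c *: x) y = c^* * bf A x y.
Proof. by rewrite /bf adjmxZ -!scalemxAl mxE. Qed.
Lemma bfZr n (A : 'M[C]_n) c x y : bf A x (c *: y) = c * bf A x y.
Proof. by rewrite /bf -scalemxAr mxE. Qed.

Lemma adj_delta n (i : 'I_n) : adjmx (delta_mx i 0 : 'cV[C]_n) = delta_mx 0 i.
Proof.
by apply/matrixP=> a b; rewrite !mxE rmorph_nat andbC.
Qed.

Lemma bf_delta n (A : 'M[C]_n) i j : bf A (delta_mx i 0) (delta_mx j 0) = A i j.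
Proof. by rewrite /bf adj_delta -rowE -colE !mxE. Qed.

Lemma bf_conj n (A : 'M[C]_n) x y : (bf A x y)^* = bf (adjmx A) y x.
Proof.
by rewrite /bf -adjmxE !adjmxM adjmxK mulmxA.
Qed.

Lemma psd_herm n (A : 'M[C]_n) : psdmx A -> adjmx A = A.
Proof.
move=> hA; apply/matrixP=> i j; rewrite adjmxE.
have hr : forall x, (bf A x x)^* = bf A x x by move=> x; apply: geC0_conj; exact: hA.
have e1 := hr (delta_mx i 0 + delta_mx j 0).
have e2 := hr (delta_mx i 0 + 'i *: delta_mx j 0).
rewrite !(bfDl, bfDr, bfZl, bfZr, bf_delta) in e1 e2.
have ei := hr (delta_mx i 0); have ej := hr (delta_mx j 0).
rewrite bf_delta in ei; rewrite bf_delta in ej.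
rewrite !(rmorphD, rmorphM, rmorphN) /= ?conjCi ?ei ?ej in e1.
rewrite !(rmorphD, rmorphM, rmorphN) /= ?conjCi ?conjCK ?ei ?ej in e2.
rewrite ?rmorphN /= ?conjCi ?opprK in e2.
set s := A i j in e1 e2 *; set t := A j i in e1 e2 *.
have hi : ('i : C) != 0 by rewrite -sqrf_eq0 sqrCi oppr_eq0 oner_eq0.
have h2n : (2:C) != 0 by rewrite pnatr_eq0.
set a := A i i in e1 e2; set b := A j j in e1 e2.

transitivity (((a + conjC s + (conjC t + b)) - a - b +
   ((a + - 'i * conjC s + 'i * (conjC t + - 'i * b)) - a + 'i * 'i * b) / 'i) / 2).
  by field; exact: hi.
rewrite e1 e2; field; exact: hi.
Qed.

End Psd.

Section Null.
Variable C : numClosedFieldType.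

Lemma adj_self_ge0 n (y : 'cV[C]_n) : 0 <= (adjmx y *m y) 0 0.
Proof. rewrite mxE; apply: sumr_ge0 => k _; rewrite mxE mulrC; exact: mul_conjC_ge0. Qed.

Lemma adj_self_eq0 n (y : 'cV[C]_n) : (adjmx y *m y) 0 0 = 0 -> y = 0.
Proof.
rewrite mxE => /eqP; rewrite psumr_eq0 => [/allP h|k _]; last first.
  by rewrite mxE mulrC; exact: mul_conjC_ge0.
apply/matrixP=> k l; rewrite (ord1 l) mxE.
have := h k (mem_index_enum k); rewrite /= mxE mulrC mul_conjC_eq0.
by move/eqP.
Qed.

Lemma psd_null n (A : 'M[C]_n) x : psdmx A -> bf A x x = 0 -> A *m x = 0.
Proof.
move=> hA hx; set y := A *m x.
set a := (adjmx y *m y) 0 0; set c := bf A y y.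
have a0 : 0 <= a by exact: adj_self_ge0.
have c0 : 0 <= c by exact: hA.
have ha : bf A y x = a by rewrite /bf -mulmxA.
have hb : bf A x y = a.
  by rewrite -[LHS]conjCK bf_conj psd_herm // ha geC0_conj.
have c1 : c + 1 != 0 by rewrite gt_eqF // ltr_wpDl.
set t := - (a / (c + 1)).
have tr : t^* = t.
  by rewrite /t rmorphN /= geC0_conj // divr_ge0 // addr_ge0.
have := hA (x + t *: y); rewrite -/(bf A _ _).
rewrite !(bfDl, bfDr, bfZl, bfZr) hx ha hb tr -/c.
have -> : 0 + t * a + (t * a + t * (t * c)) = - (a ^+ 2 * (c + 2%:R) / (c + 1) ^+ 2).
  by rewrite /t; field.
rewrite oppr_ge0 => hle.
have hge : 0 <= a ^+ 2 * (c + 2%:R) / (c + 1) ^+ 2.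
  by rewrite divr_ge0 ?exprn_ge0 ?mulr_ge0 ?addr_ge0 ?ler0n.
have : a ^+ 2 * (c + 2%:R) / (c + 1) ^+ 2 = 0 by apply/le_anti; rewrite hle hge.
move/eqP; rewrite !mulf_eq0 invr_eq0 !expf_eq0 /= (negPf c1) orbF.
have -> : (c + 2%:R == 0) = false by rewrite gt_eqF // ltr_wpDl.
rewrite ?orbb ?orbF => /eqP ha0; apply: (@adj_self_eq0 n y); exact: ha0.
Qed.

End Null.

Lemma zmod_aux (V : zmodType) (p q r : V) : (p + q) + (- r - p) + ((p - q) + (r - p)) = 0.
Proof.
rewrite -opprD.
have e1 : p + q - (r + p) = q - r by rewrite [r + p]addrC opprD addrA [p + q]addrC addrK.
have e2 : (p - q) + (r - p) = r - q by rewrite addrC addrA subrK.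
by rewrite e1 e2 addrA subrK subrr.
Qed.

Section Uniq.
Variable C : numClosedFieldType.

Lemma adj_col n m (H : 'M[C]_(n, m)) k : adjmx (col k H) = row k (adjmx H).
Proof. by apply/matrixP=> i j; rewrite !mxE. Qed.

Lemma tr_bf n (H X : 'M[C]_n) :
  \tr (adjmx H *m X *m H) = \sum_k bf X (col k H) (col k H).
Proof.
rewrite /mxtrace; apply: eq_bigr => k _.
have e : forall M : 'M[C]_n, ((delta_mx 0 k : 'rV[C]_n) *m M *m (delta_mx k 0 : 'cV[C]_n)) 0 0 = M k k.
  by move=> M; rewrite -rowE -colE !mxE.
by rewrite /bf adj_col rowE colE -e !mulmxA.
Qed.

Lemma tr_bf_ge0 n (H X : 'M[C]_n) : psdmx X -> 0 <= \tr (adjmx H *m X *m H).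
Proof. by move=> hX; rewrite tr_bf; apply: sumr_ge0 => k _; exact: hX. Qed.

Lemma tr_bf_eq0 n (H X : 'M[C]_n) : psdmx X -> \tr (adjmx H *m X *m H) = 0 ->
  X *m H = 0.
Proof.
move=> hX; rewrite tr_bf => /eqP; rewrite psumr_eq0 => [/allP h|k _]; last exact: hX.
apply/matrixP => i k.
have /eqP hk := h k (mem_index_enum k).
have := psd_null hX hk => /matrixP /(_ i 0).
by rewrite colE mulmxA -colE !mxE.
Qed.

Lemma psd1 n : psdmx (1%:M : 'M[C]_n).
Proof. by move=> x; rewrite mulmx1; exact: adj_self_ge0. Qed.

Lemma psd_sqrt_uniq n (A B : 'M[C]_n) : psdmx A -> psdmx B ->
  A *m A = B *m B -> A = B.
Proof.
move=> hA hB hAB.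
have hA' := psd_herm hA; have hB' := psd_herm hB.
set H := A - B.
have hH : adjmx H = H by rewrite /H adjmxB hA' hB'.
have key : H *m (A + B) = - ((A + B) *m H).
  apply/eqP; rewrite -addr_eq0; apply/eqP.
  rewrite /H !(mulmxDl, mulmxDr, mulmxBl, mulmxBr) hAB.
  rewrite ?mulmxN ?mulNmx; exact: zmod_aux.
set T := \tr (H *m (A + B) *m H).
have T0 : T = 0.
  have : T = - T.
    by rewrite {1}/T mxtrace_mulC key mulmxN linearN /= mulmxA.
  by move/eqP; rewrite -addr_eq0 -mulr2n mulrn_eq0 /= => /eqP.
have TAB : T = \tr (adjmx H *m A *m H) + \tr (adjmx H *m B *m H).
  by rewrite /T hH (mulmxDr H A B) mulmxDl mxtraceD.
have gA := tr_bf_ge0 H hA; have gB := tr_bf_ge0 H hB.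
have : \tr (adjmx H *m A *m H) + \tr (adjmx H *m B *m H) == 0 by rewrite -TAB T0.
rewrite paddr_eq0 // => /andP [/eqP zA /eqP zB].
have AH := tr_bf_eq0 hA zA; have BH := tr_bf_eq0 hB zB.
have HH : H *m H = 0 by rewrite {1}/H mulmxBl AH BH subrr.
have : \tr (adjmx H *m 1%:M *m H) = 0 by rewrite mulmx1 hH HH linear0.
move/(tr_bf_eq0 (@psd1 n)); rewrite mul1mx => /eqP; rewrite subr_eq0 => /eqP.
done.
Qed.

End Uniq.

Section Core.
Variable C : numClosedFieldType.

Lemma mxsqrt_eq n (S M : 'M[C]_n) : psdmx S -> S *m S = M -> mxsqrt M = S.
Proof.
move=> hS hSM.
have [h1 h2] := epsilon_spec (inhabits 0) (fun P : 'M[C]_n => psdmx P /\ P *m P = M)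
  (ex_intro _ S (conj hS hSM)).
by apply: psd_sqrt_uniq => //; rewrite h2 hSM.
Qed.

Lemma trace_norm_eq n (X S : 'M[C]_n) : psdmx S -> S *m S = adjmx X *m X ->
  trace_norm X = \tr S.
Proof. by move=> hS hSX; rewrite /trace_norm (mxsqrt_eq hS hSX). Qed.

Lemma sum_tens m n (F : 'I_(m * n) -> C) :
  \sum_u F u = \sum_i \sum_j F (mxtens_index (i, j)).
Proof.
rewrite (reindex (@mxtens_index m n)) /=; last first.
  by exists (@mxtens_unindex m n) => x _; [exact: mxtens_indexK | exact: mxtens_unindexK].
by rewrite pair_big; apply: eq_bigr => -[i j] _.
Qed.

Lemma adjmx_tens m n p q (A : 'M[C]_(m, n)) (B : 'M[C]_(p, q)) :
  adjmx (A *t B) = adjmx A *t adjmx B.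
Proof.
apply/matrixP => u v.
case: (mxtens_indexP u) => i j; case: (mxtens_indexP v) => k l.
by rewrite adjmxE !tensmxE !adjmxE rmorphM.
Qed.

Lemma mxtrace_tens m n (A : 'M[C]_m) (B : 'M[C]_n) : \tr (A *t B) = \tr A * \tr B.
Proof.
rewrite /mxtrace sum_tens big_distrlr /=; apply: eq_bigr => i _.
by apply: eq_bigr => j _; rewrite tensmxE.
Qed.

Lemma gram_tens m n p q (Zp : 'M[C]_(m, p)) (Zq : 'M[C]_(n, q)) :
  (Zp *m adjmx Zp) *t (Zq *m adjmx Zq) = (Zp *t Zq) *m adjmx (Zp *t Zq).
Proof. by rewrite adjmx_tens tensmx_mul. Qed.

Definition Mc m n (psi : 'cV[C]_(m * n)) : 'M[C]_(m, n) :=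
  \matrix_(i, j) psi (mxtens_index (i, j)) 0.
Definition Kc m n (psi : 'cV[C]_(m * n)) : 'M[C]_(m, n) :=
  \matrix_(i, j) (psi (mxtens_index (i, j)) 0)^*.

Lemma ptH m n (psi : 'cV[C]_(m * n)) :
  let H := ptransposeX (pure_dm psi) in
  adjmx H *m H = (Kc psi *m adjmx (Kc psi)) *t (adjmx (Kc psi) *m Kc psi).
Proof.
move=> H; apply/matrixP => u v.
case: (mxtens_indexP u) => i j; case: (mxtens_indexP v) => i2 j2.
rewrite tensmxE !mxE sum_tens big_distrlr /= exchange_big /=.
apply: eq_bigr => l _; apply: eq_bigr => k _.
rewrite !mxE !mxtens_indexK /= !big_ord1 !mxE /=.
rewrite !rmorphM /= !conjCK -[ord0]/(0:'I_1); ring.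
Qed.

Lemma trace_norm_pt m n p q (psi : 'cV[C]_(m * n)) (Zp : 'M[C]_(m, p)) (Zq : 'M[C]_(n, q)) :
  (Zp *m adjmx Zp) *m (Zp *m adjmx Zp) = Kc psi *m adjmx (Kc psi) ->
  (Zq *m adjmx Zq) *m (Zq *m adjmx Zq) = adjmx (Kc psi) *m Kc psi ->
  trace_norm (ptransposeX (pure_dm psi)) = \tr (Zp *m adjmx Zp) * \tr (Zq *m adjmx Zq).
Proof.
move=> hp hq; rewrite -mxtrace_tens.
apply: trace_norm_eq; first by rewrite gram_tens; exact: psd_gram.
by rewrite tensmx_mul hp hq ptH.
Qed.

End Core.

Section Decomp.
Variable C : numClosedFieldType.

Lemma gram_diag m n (Z : 'M[C]_(m, n)) (d : 'rV[C]_n) : (forall k, 0 <= d 0 k) ->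
  (Z *m diag_mx d) *m adjmx (Z *m diag_mx d) = Z *m diag_mx (\row_k (d 0 k ^+ 2)) *m adjmx Z.
Proof.
move=> hd; rewrite adjmxM adjmx_diag !mulmxA -[Z *m _ *m _]mulmxA mulmx_diag.
congr (_ *m diag_mx _ *m _); apply/matrixP => i j; by rewrite !mxE geC0_conj // expr2.
Qed.

Lemma mul6g a b c d (A : 'M[C]_(a, b)) (B : 'M[C]_b) (X : 'M[C]_(b, c)) (Y : 'M[C]_(c, b))
  (E : 'M[C]_b) (F : 'M[C]_(b, d)) :
  (A *m B *m X) *m (Y *m E *m F) = A *m (B *m (X *m Y) *m E) *m F.
Proof. by rewrite !mulmxA. Qed.

Lemma mul6 a b c d (A : 'M[C]_(a, b)) (B : 'M[C]_b) (X : 'M[C]_(b, c)) (Y : 'M[C]_(c, b))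
  (E : 'M[C]_b) (F : 'M[C]_(b, d)) :
  X *m Y = 1%:M -> (A *m B *m X) *m (Y *m E *m F) = A *m (B *m E) *m F.
Proof.
move=> hXY; rewrite !mulmxA -(mulmxA (A *m B) X Y) hXY mulmx1.
by rewrite -(mulmxA A B E).
Qed.

Variables (m n : nat) (K : 'M[C]_(m, n)) (U : 'M[C]_m) (lam : 'rV[C]_m).
Hypotheses (hU1 : U *m adjmx U = 1%:M) (hU2 : adjmx U *m U = 1%:M)
  (hK : K *m adjmx K = adjmx U *m diag_mx lam *m U).

Definition W := U *m K.

Lemma WW : W *m adjmx W = diag_mx lam.
Proof.
rewrite /W adjmxM !mulmxA -[U *m K *m adjmx K]mulmxA hK.
by rewrite !mulmxA hU1 mul1mx -mulmxA hU1 mulmx1.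
Qed.

Lemma lam_ge0 k : 0 <= lam 0 k.
Proof.
have -> : lam 0 k = (W *m adjmx W) k k by rewrite WW mxE eqxx mulr1n.
by rewrite mxE; apply: sumr_ge0 => l _; rewrite adjmxE; exact: mul_conjC_ge0.
Qed.

Definition r4 := \row_k sqrtC (sqrtC (lam 0 k)).
Definition ee := \row_k sqrtC ((sqrtC (lam 0 k))^-1).
Definition Zp := adjmx U *m diag_mx r4.
Definition Zq := adjmx W *m diag_mx ee.

Lemma r4_ge0 k : 0 <= r4 0 k.
Proof. by rewrite mxE !sqrtC_ge0 lam_ge0. Qed.
Lemma ee_ge0 k : 0 <= ee 0 k.
Proof. by rewrite mxE sqrtC_ge0 invr_ge0 sqrtC_ge0 lam_ge0. Qed.

Lemma ZpE : Zp *m adjmx Zp = adjmx U *m diag_mx (\row_k sqrtC (lam 0 k)) *m U.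
Proof.
rewrite /Zp gram_diag; last exact: r4_ge0.
rewrite adjmxK; congr (_ *m diag_mx _ *m _); apply/matrixP => i j.
by rewrite !mxE sqrtCK.
Qed.

Lemma Zp_sq : (Zp *m adjmx Zp) *m (Zp *m adjmx Zp) = K *m adjmx K.
Proof.
rewrite ZpE hK (mul6 _ _ _ _ hU1) mulmx_diag.
congr (_ *m diag_mx _ *m _); apply/matrixP => i j.
by rewrite !mxE (ord1 i) -expr2 sqrtCK.
Qed.

Lemma Zp_tr : \tr (Zp *m adjmx Zp) = \sum_k sqrtC (lam 0 k).
Proof.
rewrite ZpE mxtrace_mulC mulmxA hU1 mul1mx mxtrace_diag.
by apply: eq_bigr => k _; rewrite mxE.
Qed.

Lemma ZqE : Zq *m adjmx Zq = adjmx W *m diag_mx (\row_k (sqrtC (lam 0 k))^-1) *m W.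
Proof.
rewrite /Zq gram_diag; last exact: ee_ge0.
rewrite adjmxK; congr (_ *m diag_mx _ *m _); apply/matrixP => i j.
by rewrite !mxE sqrtCK.
Qed.

Lemma Wzero k l : lam 0 k = 0 -> W k l = 0.
Proof.
move=> h0.
have : (W *m adjmx W) k k = 0 by rewrite WW mxE eqxx mulr1n h0.
rewrite mxE => /eqP; rewrite psumr_eq0 => [/allP h|j _]; last by rewrite adjmxE; exact: mul_conjC_ge0.
have := h l (mem_index_enum l); rewrite /= adjmxE mul_conjC_eq0.
by move/eqP.
Qed.

Lemma DW (d : 'rV[C]_m) : (forall i, lam 0 i != 0 -> d 0 i = 1) -> diag_mx d *m W = W.
Proof.
move=> hd; rewrite mul_diag_mx; apply/matrixP => i j; rewrite mxE.
have [h0|h0] := eqVneq (lam 0 i) 0; first by rewrite (Wzero j h0) mulr0.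
by rewrite hd // mul1r.
Qed.

Lemma Zq_sq : (Zq *m adjmx Zq) *m (Zq *m adjmx Zq) = adjmx K *m K.
Proof.
rewrite ZqE mul6g WW !mulmx_diag -mulmxA DW; last first.
  move=> i h0; rewrite !mxE.
  have s0 : sqrtC (lam 0 i) != 0 by rewrite sqrtC_eq0.
  rewrite -{2}(sqrtCK (lam 0 i)) expr2.
  by rewrite mulrA mulVf // mul1r mulfV.
by rewrite /W adjmxM -mulmxA [adjmx U *m _]mulmxA hU2 mul1mx.
Qed.

Lemma Zq_tr : \tr (Zq *m adjmx Zq) = \sum_k sqrtC (lam 0 k).
Proof.
rewrite ZqE mxtrace_mulC mulmxA WW mulmx_diag mxtrace_diag.
apply: eq_bigr => k _; rewrite !mxE.
have [h0|h0] := eqVneq (lam 0 k) 0; first by rewrite h0 sqrtC0 mul0r.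
have s0 : sqrtC (lam 0 k) != 0 by rewrite sqrtC_eq0.
by rewrite -{1}(sqrtCK (lam 0 k)) expr2 mulfK.
Qed.

Lemma decomp_exists : exists (Zp : 'M[C]_(m, m)) (Zq : 'M[C]_(n, m)),
  [/\ (Zp *m adjmx Zp) *m (Zp *m adjmx Zp) = K *m adjmx K,
      (Zq *m adjmx Zq) *m (Zq *m adjmx Zq) = adjmx K *m K,
      \tr (Zp *m adjmx Zp) = \sum_k sqrtC (lam 0 k) &
      \tr (Zq *m adjmx Zq) = \sum_k sqrtC (lam 0 k)].
Proof. by exists Zp, Zq; split; [exact: Zp_sq|exact: Zq_sq|exact: Zp_tr|exact: Zq_tr]. Qed.

End Decomp.

Section Spec.
Variable C : numClosedFieldType.

Lemma spectral_exists n (A : 'M[C]_n) : adjmx A = A ->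
  exists (U : 'M[C]_n) (lam : 'rV[C]_n),
    [/\ U *m adjmx U = 1%:M, adjmx U *m U = 1%:M & A = adjmx U *m diag_mx lam *m U].
Proof.
move=> hA.
have hu := spectral_unitarymx A.
have hu1 : spectralmx A *m adjmx (spectralmx A) = 1%:M.
  by move/unitarymxP: hu; rewrite -adjmx_tr.
have hinv : invmx (spectralmx A) = adjmx (spectralmx A).
  by rewrite invmx_unitary // -adjmx_tr.
have hn : A \is normalmx.
  by apply/normalmxP; rewrite -adjmx_tr hA.
exists (spectralmx A), (spectral_diag A); split => //.
  by rewrite -hinv mulVmx // spectral_unit.
by rewrite -hinv; apply/orthomx_spectralP.
Qed.

Lemma adjmx_gram m n (K : 'M[C]_(m, n)) : adjmx (K *m adjmx K) = K *m adjmx K.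
Proof. by rewrite adjmxM adjmxK. Qed.

Lemma tn_formula1 m n (psi : 'cV[C]_(m * n)) (U : 'M[C]_m) (lam : 'rV[C]_m) :
  U *m adjmx U = 1%:M -> adjmx U *m U = 1%:M ->
  Kc psi *m adjmx (Kc psi) = adjmx U *m diag_mx lam *m U ->
  trace_norm (ptransposeX (pure_dm psi)) = (\sum_k sqrtC (lam 0 k)) ^+ 2.
Proof.
move=> h1 h2 hK.
have [Zp [Zq [e1 e2 e3 e4]]] := decomp_exists h1 h2 hK.
by rewrite (trace_norm_pt e1 e2) e3 e4 expr2.
Qed.

Lemma tn_formula2 m n (psi : 'cV[C]_(m * n)) (U : 'M[C]_n) (lam : 'rV[C]_n) :
  U *m adjmx U = 1%:M -> adjmx U *m U = 1%:M ->
  adjmx (Kc psi) *m Kc psi = adjmx U *m diag_mx lam *m U ->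
  trace_norm (ptransposeX (pure_dm psi)) = (\sum_k sqrtC (lam 0 k)) ^+ 2.
Proof.
move=> h1 h2 hK.
have hK' : adjmx (Kc psi) *m adjmx (adjmx (Kc psi)) = adjmx U *m diag_mx lam *m U.
  by rewrite adjmxK.
have [Zp [Zq [e1 e2 e3 e4]]] := decomp_exists h1 h2 hK'.
rewrite adjmxK in e2.
by rewrite adjmxK in e1; rewrite (trace_norm_pt e2 e1) e3 e4 expr2.
Qed.

Lemma lam_ge0' m n (K : 'M[C]_(m, n)) (U : 'M[C]_m) (lam : 'rV[C]_m) :
  U *m adjmx U = 1%:M -> adjmx U *m U = 1%:M ->
  K *m adjmx K = adjmx U *m diag_mx lam *m U -> forall k, 0 <= lam 0 k.
Proof. by move=> h1 h2 hK k; exact: (lam_ge0 h1 hK). Qed.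

Lemma lam_sum m n (K : 'M[C]_(m, n)) (U : 'M[C]_m) (lam : 'rV[C]_m) :
  U *m adjmx U = 1%:M -> adjmx U *m U = 1%:M ->
  K *m adjmx K = adjmx U *m diag_mx lam *m U ->
  \sum_k lam 0 k = \tr (K *m adjmx K) /\ \sum_k lam 0 k ^+ 2 = \tr ((K *m adjmx K) *m (K *m adjmx K)).
Proof.
move=> h1 h2 hK; rewrite hK (mul6 _ _ _ _ h1) mulmx_diag.
rewrite mxtrace_mulC mulmxA h1 mul1mx mxtrace_diag.
rewrite mxtrace_mulC mulmxA h1 mul1mx mxtrace_diag; split => //.
by apply: eq_bigr => k _; rewrite mxE expr2.
Qed.

End Spec.

Section Scal.
Variable C : numClosedFieldType.

Lemma e2_ineq m (s : 'I_m -> C) : (forall k, 0 <= s k) ->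
  0 <= (\sum_k s k) ^+ 2 - \sum_k s k ^+ 2 /\
  ((\sum_k s k ^+ 2) ^+ 2 - \sum_k s k ^+ 4) *+ 2 <= ((\sum_k s k) ^+ 2 - \sum_k s k ^+ 2) ^+ 2.
Proof.
elim: m s => [|m IH] s hs.
  by rewrite !big_ord0 expr0n /= subrr expr0n /= mul0rn lexx.
have [h1 h2] := IH (fun k => s (widen_ord (leqnSn m) k)) (fun k => hs _).
rewrite !big_ord_recr /=.
set S := \sum_(i < m) s (widen_ord _ i) in h1 h2 *.
set Q := \sum_(i < m) s (widen_ord _ i) ^+ 2 in h1 h2 *.
set P := \sum_(i < m) s (widen_ord _ i) ^+ 4 in h1 h2 *.
set x := s ord_max.
have x0 : 0 <= x by exact: hs.
have S0 : 0 <= S by apply: sumr_ge0 => k _; exact: hs.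
split.
  have -> : (S + x) ^+ 2 - (Q + x ^+ 2) = (S ^+ 2 - Q) + (x * S) *+ 2 by ring.
  by apply: addr_ge0 => //; rewrite mulrn_wge0 // mulr_ge0.
rewrite -subr_ge0.
have -> : ((S + x) ^+ 2 - (Q + x ^+ 2)) ^+ 2 - ((Q + x ^+ 2) ^+ 2 - (P + x ^+ 4)) *+ 2 =
  ((S ^+ 2 - Q) ^+ 2 - (Q ^+ 2 - P) *+ 2) + (x * S * (S ^+ 2 - Q)) *+ 4
   + (x ^+ 2 * (S ^+ 2 - Q)) *+ 4 by ring.
apply: addr_ge0; last by rewrite mulrn_wge0 // mulr_ge0 // exprn_ge0.
apply: addr_ge0; first by rewrite subr_ge0.
by rewrite mulrn_wge0 // !mulr_ge0.
Qed.

Lemma e2_two (s : 'I_2 -> C) :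
  ((\sum_k s k) ^+ 2 - \sum_k s k ^+ 2) ^+ 2 = ((\sum_k s k ^+ 2) ^+ 2 - \sum_k s k ^+ 4) *+ 2.
Proof. rewrite !big_ord_recr !big_ord0 /=; ring. Qed.

Lemma final_ineq (x y z pA pB pC : C) : 0 <= x -> 0 <= y -> 0 <= z ->
  x ^+ 2 *+ 2 = 1 - pA -> 1 - pB <= y ^+ 2 *+ 2 -> 1 - pC <= z ^+ 2 *+ 2 ->
  pB + pC <= 1 + pA -> x <= y + z.
Proof.
move=> x0 y0 z0 hx hy hz hp.
have h1 : x ^+ 2 *+ 2 <= (y ^+ 2 + z ^+ 2) *+ 2.
  rewrite hx mulrnDl; apply: le_trans (lerD hy hz).
  have -> : 1 - pB + (1 - pC) = (1 + 1) - (pB + pC) by ring.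
  have -> : 1 - pA = (1 + 1) - (1 + pA) by ring.
  by rewrite lerB.
have h2 : x ^+ 2 <= y ^+ 2 + z ^+ 2 by rewrite -(ler_pMn2r (n:=2)).
have h3 : y ^+ 2 + z ^+ 2 <= (y + z) ^+ 2.
  rewrite -subr_ge0; have -> : (y + z) ^+ 2 - (y ^+ 2 + z ^+ 2) = (y * z) *+ 2 by ring.
  by rewrite mulrn_wge0 // mulr_ge0.
have := le_trans h2 h3.
by rewrite ler_sqr // ?nnegrE // addr_ge0.
Qed.

End Scal.

Section Pur.
Variable C : numClosedFieldType.

Lemma tr1_sum m n (K : 'M[C]_(m, n)) :
  \tr (K *m adjmx K) = \sum_(q : 'I_m * 'I_n) K q.1 q.2 * (K q.1 q.2)^*.
Proof.
rewrite /mxtrace -(pair_bigA _ (fun x y => K x y * (K x y)^*)) /=.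
apply: eq_bigr => x _; rewrite mxE.
by apply: eq_bigr => y _; rewrite adjmxE.
Qed.

Lemma tr2_sum m n (K : 'M[C]_(m, n)) :
  \tr ((K *m adjmx K) *m (K *m adjmx K)) =
  \sum_(q : ('I_m * 'I_n) * ('I_m * 'I_n))
     K q.1.1 q.1.2 * (K q.2.1 q.1.2)^* * K q.2.1 q.2.2 * (K q.1.1 q.2.2)^*.
Proof.
pose G (q1 q2 : 'I_m * 'I_n) := K q1.1 q1.2 * (K q2.1 q1.2)^* * K q2.1 q2.2 * (K q1.1 q2.2)^*.
transitivity (\sum_x \sum_x2 \sum_y \sum_y2 G (x, y) (x2, y2)).
  rewrite /mxtrace; apply: eq_bigr => x _; rewrite mxE; apply: eq_bigr => x2 _.
  rewrite !mxE big_distrlr /=; apply: eq_bigr => y _; apply: eq_bigr => y2 _.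
  by rewrite /G /= !adjmxE !mulrA.
transitivity (\sum_x \sum_y \sum_x2 \sum_y2 G (x, y) (x2, y2)).
  by apply: eq_bigr => x _; rewrite exchange_big.
rewrite -(pair_bigA _ G) -(pair_bigA _ (fun x y => \sum_q2 G (x, y) q2)) /=.
apply: eq_bigr => x _; apply: eq_bigr => y _.
by rewrite -(pair_bigA _ (fun x2 y2 => G (x, y) (x2, y2))).
Qed.

Lemma sum_reindex2 (P X : finType) (beta : P -> X) (gam : X -> P) (F : X * X -> C) :
  cancel beta gam -> cancel gam beta ->
  \sum_(q : X * X) F q = \sum_(t : P * P) F (beta t.1, beta t.2).
Proof.
move=> h1 h2; rewrite (reindex (fun t : P * P => (beta t.1, beta t.2))) //.
exists (fun q : X * X => (gam q.1, gam q.2)) => [[x y]|[x y]] _ /=; by rewrite ?h1 ?h2.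
Qed.

Lemma sum_reindex1 (P X : finType) (beta : P -> X) (gam : X -> P) (F : X -> C) :
  cancel beta gam -> cancel gam beta ->
  \sum_(q : X) F q = \sum_(t : P) F (beta t).
Proof.
move=> h1 h2; rewrite (reindex beta) //.
by exists gam => x _.
Qed.

Variables (a b c : nat) (psi : 'cV[C]_(a * b * c)).
Definition P3 := ('I_a * 'I_b * 'I_c)%type.
Definition phi (p : P3) := coefABC psi p.1.1 p.1.2 p.2.
Definition Psi (t : P3 * P3) := phi t.1 * phi t.2.
Definition sB (t : P3 * P3) : P3 * P3 :=
  let: ((i, j, k), (i2, j2, k2)) := t in ((i, j2, k), (i2, j, k2)).
Definition sC (t : P3 * P3) : P3 * P3 :=
  let: ((i, j, k), (i2, j2, k2)) := t in ((i, j, k2), (i2, j2, k)).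
Definition GG (s : P3 * P3 -> P3 * P3) := \sum_t (Psi t)^* * Psi (s t).

Definition TT t := Psi t - Psi (sB t) - Psi (sC t) + Psi (sB (sC t)).

Lemma sB_inv t : sB (sB t) = t. Proof. by case: t => [[[i j] k] [[i2 j2] k2]]. Qed.
Lemma sC_inv t : sC (sC t) = t. Proof. by case: t => [[[i j] k] [[i2 j2] k2]]. Qed.
Lemma sBC t : sB (sC t) = sC (sB t). Proof. by case: t => [[[i j] k] [[i2 j2] k2]]. Qed.

Lemma TT_sB t : TT (sB t) = - TT t.
Proof. by rewrite /TT sB_inv (sBC (sB t)) sB_inv -(sBC t); ring. Qed.
Lemma TT_sC t : TT (sC t) = - TT t.
Proof. by rewrite /TT sC_inv; ring. Qed.

Lemma sum_swap (s : P3 * P3 -> P3 * P3) (F : P3 * P3 -> C) :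
  (forall t, s (s t) = t) -> \sum_t F (s t) = \sum_t F t.
Proof.
move=> hs; rewrite [RHS](reindex_inj (h := s)) //.
by move=> x y hxy; rewrite -(hs x) -(hs y) hxy.
Qed.

Lemma TT_identity : \sum_t (TT t)^* * TT t =
  (GG id - GG sB - GG sC + GG (fun t => sB (sC t))) *+ 4.
Proof.
have e : forall s, (forall t, s (s t) = t) ->
    \sum_t (Psi (s t))^* * TT t = \sum_t (Psi t)^* * TT (s t).
  move=> s hs; rewrite -(sum_swap (fun t => (Psi t)^* * TT (s t)) hs).
  by apply: eq_bigr => t _; rewrite hs.
have hBC : forall t, sB (sC (sB (sC t))) = t by move=> t; rewrite sBC sB_inv sC_inv.
transitivity (\sum_t (Psi t)^* * TT t - \sum_t (Psi (sB t))^* * TT t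
   - \sum_t (Psi (sC t))^* * TT t + \sum_t (Psi (sB (sC t)))^* * TT t).
  rewrite -!sumrB -big_split /=; apply: eq_bigr => t _.
  by rewrite {1}/TT !rmorphD !rmorphN /=; ring.
rewrite (e _ sB_inv) (e _ sC_inv) (e (fun t => sB (sC t)) hBC).
under [in X in _ - X - _ + _]eq_bigr do rewrite TT_sB.
under [in X in _ - _ - X + _]eq_bigr do rewrite TT_sC.
under [in X in _ - _ - _ + X]eq_bigr do rewrite TT_sB TT_sC opprK.
rewrite /GG -!sumrB -!big_split /= -sumrMnl; apply: eq_bigr => t _.
by rewrite /TT /=; ring.
Qed.

Lemma GG_ineq : 0 <= GG id - GG sB - GG sC + GG (fun t => sB (sC t)).
Proof.
have : 0 <= \sum_t (TT t)^* * TT t.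
  by apply: sumr_ge0 => t _; rewrite mulrC; exact: mul_conjC_ge0.
by rewrite TT_identity pmulrn_lge0.
Qed.

End Pur.

Arguments mxtens_unindex : simpl never.
Arguments mxtens_index : simpl never.
Section Cuts.
Variable C : numClosedFieldType.
Variables (a b c : nat) (psi : 'cV[C]_(a * b * c)).

Definition KA := Kc (vec_A_CB psi).
Definition KB := Kc (vec_AC_B psi).
Definition KC := Kc (vec_AB_C psi).

Definition bA (p : P3 a b c) : 'I_a * 'I_(c * b) := (p.1.1, mxtens_index (p.2, p.1.2)).
Definition gA (q : 'I_a * 'I_(c * b)) : P3 a b c :=
  ((q.1, (mxtens_unindex q.2).2), (mxtens_unindex q.2).1).
Definition bB (p : P3 a b c) : 'I_(a * c) * 'I_b := (mxtens_index (p.1.1, p.2), p.1.2).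
Definition gB (q : 'I_(a * c) * 'I_b) : P3 a b c :=
  (((mxtens_unindex q.1).1, q.2), (mxtens_unindex q.1).2).
Definition bC (p : P3 a b c) : 'I_(a * b) * 'I_c := (mxtens_index (p.1.1, p.1.2), p.2).
Definition gC (q : 'I_(a * b) * 'I_c) : P3 a b c :=
  (((mxtens_unindex q.1).1, (mxtens_unindex q.1).2), q.2).
Definition b0 (p : P3 a b c) : 'I_(a * b * c) := mxtens_index (mxtens_index (p.1.1, p.1.2), p.2).
Definition g0 (u : 'I_(a * b * c)) : P3 a b c :=
  (((mxtens_unindex (mxtens_unindex u).1).1, (mxtens_unindex (mxtens_unindex u).1).2),
    (mxtens_unindex u).2).

Lemma bAK : cancel bA gA. Proof. by case=> [[i j] k]; rewrite /bA /gA mxtens_indexK. Qed.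
Lemma gAK : cancel gA bA.
Proof. by case=> i y; case: (mxtens_indexP y) => k j; rewrite /bA /gA mxtens_indexK. Qed.
Lemma bBK : cancel bB gB. Proof. by case=> [[i j] k]; rewrite /bB /gB mxtens_indexK. Qed.
Lemma gBK : cancel gB bB.
Proof. by case=> x j; case: (mxtens_indexP x) => i k; rewrite /bB /gB mxtens_indexK. Qed.
Lemma bCK : cancel bC gC. Proof. by case=> [[i j] k]; rewrite /bC /gC mxtens_indexK. Qed.
Lemma gCK : cancel gC bC.
Proof. by case=> x k; case: (mxtens_indexP x) => i j; rewrite /bC /gC mxtens_indexK. Qed.
Lemma b0K : cancel b0 g0. Proof. by case=> [[i j] k]; rewrite /b0 /g0 !mxtens_indexK. Qed.
Lemma g0K : cancel g0 b0.
Proof.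
move=> u; case: (mxtens_indexP u) => x k; case: (mxtens_indexP x) => i j.
by rewrite /b0 /g0 !mxtens_indexK.
Qed.


Lemma pA_eq : \tr ((KA *m adjmx KA) *m (KA *m adjmx KA)) = GG psi (fun t => sB (sC t)).
Proof.
rewrite tr2_sum (sum_reindex2 _ bAK gAK) /GG; apply: eq_bigr.
move=> [[[i j] k] [[i2 j2] k2]] _.
rewrite /KA /Kc /vec_A_CB /bA; cbn [fst snd]; rewrite !mxE !mxtens_indexK; cbn [fst snd]. rewrite ?mxtens_indexK; cbn [fst snd]; rewrite !conjCK.
by rewrite /Psi /phi /= !rmorphM /=; ring.
Qed.

Lemma pB_eq : \tr ((KB *m adjmx KB) *m (KB *m adjmx KB)) = GG psi (@sB a b c).
Proof.
rewrite tr2_sum (sum_reindex2 _ bBK gBK) /GG; apply: eq_bigr.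
move=> [[[i j] k] [[i2 j2] k2]] _.
rewrite /KB /Kc /vec_AC_B /bB; cbn [fst snd]; rewrite !mxE !mxtens_indexK; cbn [fst snd].
rewrite ?mxtens_indexK; cbn [fst snd]; rewrite !conjCK.
by rewrite /Psi /phi /= !rmorphM /=; ring.
Qed.

Lemma pC_eq : \tr ((KC *m adjmx KC) *m (KC *m adjmx KC)) = GG psi (@sC a b c).
Proof.
rewrite tr2_sum (sum_reindex2 _ bCK gCK) /GG; apply: eq_bigr.
move=> [[[i j] k] [[i2 j2] k2]] _.
rewrite /KC /Kc /vec_AB_C /bC; cbn [fst snd]; rewrite !mxE !mxtens_indexK; cbn [fst snd].
rewrite ?mxtens_indexK; cbn [fst snd]; rewrite !conjCK.
by rewrite /Psi /phi /= !rmorphM /=; ring.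
Qed.

Definition nrm := \sum_p (phi psi p)^* * phi psi p.

Lemma nrmE : nrm = (adjmx psi *m psi) 0 0.
Proof.
rewrite mxE (sum_reindex1 _ b0K g0K) /nrm; apply: eq_bigr => -[[i j] k] _.
by rewrite adjmxE /phi /coefABC /b0.
Qed.

Lemma nA_eq : \tr (KA *m adjmx KA) = nrm.
Proof.
rewrite tr1_sum (sum_reindex1 _ bAK gAK) /nrm; apply: eq_bigr => -[[i j] k] _.
rewrite /KA /Kc /vec_A_CB /bA; cbn [fst snd]; rewrite !mxE !mxtens_indexK; cbn [fst snd].
rewrite ?mxtens_indexK; cbn [fst snd]; rewrite !conjCK.
by rewrite /phi /= mulrC.
Qed.

Lemma nB_eq : \tr (KB *m adjmx KB) = nrm.
Proof.
rewrite tr1_sum (sum_reindex1 _ bBK gBK) /nrm; apply: eq_bigr => -[[i j] k] _.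
rewrite /KB /Kc /vec_AC_B /bB; cbn [fst snd]; rewrite !mxE !mxtens_indexK; cbn [fst snd].
rewrite ?mxtens_indexK; cbn [fst snd]; rewrite !conjCK.
by rewrite /phi /= mulrC.
Qed.

Lemma nC_eq : \tr (KC *m adjmx KC) = nrm.
Proof.
rewrite tr1_sum (sum_reindex1 _ bCK gCK) /nrm; apply: eq_bigr => -[[i j] k] _.
rewrite /KC /Kc /vec_AB_C /bC; cbn [fst snd]; rewrite !mxE !mxtens_indexK; cbn [fst snd].
rewrite ?mxtens_indexK; cbn [fst snd]; rewrite !conjCK.
by rewrite /phi /= mulrC.
Qed.

Lemma GGid : GG psi id = nrm ^+ 2.
Proof.
rewrite /GG expr2 /nrm big_distrlr /= pair_bigA /=; apply: eq_bigr => -[p1 p2] _.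
by rewrite /Psi /= rmorphM /=; ring.
Qed.

Lemma purity_ineq : unit_vector psi ->
  \tr ((KB *m adjmx KB) *m (KB *m adjmx KB)) + \tr ((KC *m adjmx KC) *m (KC *m adjmx KC))
  <= 1 + \tr ((KA *m adjmx KA) *m (KA *m adjmx KA)).
Proof.
move=> hu; rewrite pA_eq pB_eq pC_eq.
have h1 : GG psi id = 1 by rewrite GGid nrmE hu expr1n.
have := GG_ineq psi; rewrite h1 => h; rewrite -subr_ge0.
set x := GG psi (@sB a b c); set y := GG psi (@sC a b c); set z := GG psi _.
by have -> : 1 + z - (x + y) = 1 - x - y + z by ring.
Qed.

End Cuts.

Section Neg.
Variable C : numClosedFieldType.

Lemma cut_facts m n (psi : 'cV[C]_(m * n)) :
  \tr (Kc psi *m adjmx (Kc psi)) = 1 ->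
  exists s : 'I_m -> C, [/\ forall k, 0 <= s k,
    negativity (pure_dm psi) = ((\sum_k s k) ^+ 2 - \sum_k s k ^+ 2) / 2%:R,
    \sum_k s k ^+ 2 = 1 &
    \sum_k s k ^+ 4 = \tr ((Kc psi *m adjmx (Kc psi)) *m (Kc psi *m adjmx (Kc psi)))].
Proof.
move=> h1.
have [U [lam [hU1 hU2 hK]]] := spectral_exists (adjmx_gram (Kc psi)).
have hl := lam_ge0' hU1 hU2 hK.
have [sl sl2] := lam_sum hU1 hU2 hK.
have e2 : \sum_k sqrtC (lam 0 k) ^+ 2 = 1.
  by rewrite -h1 -sl; apply: eq_bigr => k _; rewrite sqrtCK.
exists (fun k => sqrtC (lam 0 k)); split.
- by move=> k; rewrite sqrtC_ge0.
- by rewrite /negativity (tn_formula1 hU1 hU2 hK) e2.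
- exact: e2.
- by rewrite -sl2; apply: eq_bigr => k _; rewrite (exprM _ 2 2) sqrtCK.
Qed.

Lemma neg_bound m n (psi : 'cV[C]_(m * n)) :
  \tr (Kc psi *m adjmx (Kc psi)) = 1 ->
  0 <= negativity (pure_dm psi) /\
  1 - \tr ((Kc psi *m adjmx (Kc psi)) *m (Kc psi *m adjmx (Kc psi)))
    <= negativity (pure_dm psi) ^+ 2 *+ 2.
Proof.
move=> h1; have [s [s0 hN hs2 hs4]] := cut_facts h1.
have [hE hF] := e2_ineq s0.
rewrite hN -hs4; set E := _ - _ in hE hF *.
rewrite hs2 expr1n in hF.
have h2 : (0 : C) < 2%:R by rewrite ltr0n.
split; first by rewrite divr_ge0 // ltW.
have -> : (E / 2%:R) ^+ 2 *+ 2 = E ^+ 2 / 2%:R.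
  by rewrite -mulr_natr; field.
by rewrite ler_pdivlMr // mulr_natr.
Qed.

Lemma neg_two n (psi : 'cV[C]_(2 * n)) :
  \tr (Kc psi *m adjmx (Kc psi)) = 1 ->
  negativity (pure_dm psi) ^+ 2 *+ 2 =
  1 - \tr ((Kc psi *m adjmx (Kc psi)) *m (Kc psi *m adjmx (Kc psi))).
Proof.
move=> h1; have [s [s0 hN hs2 hs4]] := cut_facts h1.
have e := e2_two s.
rewrite hN -hs4.
transitivity ((\sum_k s k ^+ 2) ^+ 2 - \sum_k s k ^+ 4); last by rewrite hs2 expr1n.
set F := _ - \sum_k s k ^+ 4 in e *.
have -> : F = ((\sum_k s k) ^+ 2 - \sum_k s k ^+ 2) ^+ 2 / 2%:R by rewrite e -mulr_natr; field.
by rewrite -mulr_natr; field.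
Qed.

End Neg.

Lemma qubit_direction (C : numClosedFieldType) (dB dC : nat) (psi : 'cV[C]_(2 * dB * dC)) :
  unit_vector psi -> N_A_CB psi <= N_AC_B psi + N_AB_C psi.
Proof.
move=> hu.
have hn : nrm psi = 1 by rewrite nrmE hu.
have hA := nA_eq psi; have hB := nB_eq psi; have hC := nC_eq psi.
rewrite hn in hA hB hC.
have [yB yB2] := neg_bound hB.
have [zC zC2] := neg_bound hC.
have xA2 := neg_two hA.
have [xA _] := neg_bound hA.
apply: (final_ineq xA yB zC xA2 yB2 zC2).
exact: purity_ineq.
Qed.

Section Diag.
Variable C : numClosedFieldType.

Lemma tn_diag m n (psi : 'cV[C]_(m * n)) :
  (forall y y', y != y' -> (adjmx (Kc psi) *m Kc psi) y y' = 0) ->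
  trace_norm (ptransposeX (pure_dm psi)) =
  (\sum_y sqrtC ((adjmx (Kc psi) *m Kc psi) y y)) ^+ 2.
Proof.
move=> hd.
pose lam := \row_y (adjmx (Kc psi) *m Kc psi) y y.
have -> : \sum_y sqrtC ((adjmx (Kc psi) *m Kc psi) y y) = \sum_y sqrtC (lam 0 y).
  by apply: eq_bigr => y _; rewrite /lam [in RHS]mxE.
apply: (@tn_formula2 _ m n psi 1%:M lam); rewrite ?adjmx1 ?mulmx1 ?mul1mx //.
apply/matrixP => y y'; rewrite [in RHS]mxE /lam [in RHS]mxE.
have [<-|ne] := eqVneq y y'; first by rewrite mulr1n.
by rewrite mulr0n hd.
Qed.

Variables (a b c : nat) (psi : 'cV[C]_(a * b * c)).

Lemma KtKA k j k2 j2 : (adjmx (KA psi) *m KA psi) (mxtens_index (k, j)) (mxtens_index (k2, j2)) =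
  \sum_i phi psi ((i, j), k) * (phi psi ((i, j2), k2))^*.
Proof.
rewrite mxE; apply: eq_bigr => i _.
rewrite adjmxE /KA /Kc /vec_A_CB !mxE !mxtens_indexK; cbn [fst snd].
by rewrite ?mxtens_indexK; cbn [fst snd]; rewrite conjCK.
Qed.

Lemma KtKB j j2 : (adjmx (KB psi) *m KB psi) j j2 =
  \sum_i \sum_k phi psi ((i, j), k) * (phi psi ((i, j2), k))^*.
Proof.
rewrite mxE sum_tens; apply: eq_bigr => i _; apply: eq_bigr => k _.
rewrite adjmxE /KB /Kc /vec_AC_B !mxE !mxtens_indexK; cbn [fst snd].
by rewrite ?mxtens_indexK; cbn [fst snd]; rewrite conjCK.
Qed.

Lemma KtKC k k2 : (adjmx (KC psi) *m KC psi) k k2 =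
  \sum_i \sum_j phi psi ((i, j), k) * (phi psi ((i, j), k2))^*.
Proof.
rewrite mxE sum_tens; apply: eq_bigr => i _; apply: eq_bigr => j _.
rewrite adjmxE /KC /Kc /vec_AB_C !mxE !mxtens_indexK; cbn [fst snd].
by rewrite ?mxtens_indexK; cbn [fst snd]; rewrite conjCK.
Qed.

End Diag.

Lemma sum_ind (C : numClosedFieldType) n (v : nat) :
  \sum_(i < n) (((i : nat) == v)%:R : C) = ((v < n)%N)%:R.
Proof.
elim: n => [|n IH]; first by rewrite big_ord0 ltn0.
rewrite big_ord_recr /= IH.
case: (ltngtP v n) => [h|h|->].
- have -> : (v < n.+1)%N = true by apply/idP; lia.
  by rewrite addr0.
- have -> : (v < n.+1)%N = false by apply/negbTE/negP; lia.
  by rewrite addr0.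
- by rewrite ltnSn add0r.
Qed.


Definition indb (i j k : nat) := (i == 2 * j + k) && (j * k == 0).

Lemma indb_off i j k j2 k2 : (k < 2)%N -> (k2 < 2)%N -> indb i j k -> indb i j2 k2 ->
  j = j2 /\ k = k2.
Proof. rewrite /indb => h1 h2 /andP[/eqP e1 _] /andP[/eqP e2 _]; lia. Qed.

Section Counter.
Variable C : numClosedFieldType.
Variables (dA : nat) (h3 : (3 <= dA)%N).

Definition rr : C := sqrtC (3%:R^-1).
Lemma rr_ge0 : 0 <= rr. Proof. by rewrite sqrtC_ge0 invr_ge0 ler0n. Qed.
Lemma rr2 : rr ^+ 2 = 3%:R^-1. Proof. by rewrite sqrtCK. Qed.

Definition ff (p : P3 dA 2 2) : C := rr * (indb p.1.1 p.1.2 p.2)%:R.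
Definition cpsi : 'cV[C]_(dA * 2 * 2) := \col_u ff (g0 u).

Lemma phi_cpsi p : phi cpsi p = ff p.
Proof. by rewrite /phi /coefABC -/(b0 p) mxE b0K. Qed.

Lemma ff_mul p q : ff p * (ff q)^* =
  rr ^+ 2 * ((indb p.1.1 p.1.2 p.2 && indb q.1.1 q.1.2 q.2) : nat)%:R.
Proof.
rewrite /ff rmorphM /= rmorph_nat geC0_conj ?rr_ge0 // expr2 -mulnb natrM.
by rewrite -!mulrA; congr (_ * _); rewrite mulrCA.
Qed.

Lemma sum_diag j k : (j < 2)%N -> (k < 2)%N ->
  \sum_(i < dA) ((indb i j k && indb i j k) : nat)%:R = ((j * k == 0) : nat)%:R :> C.
Proof.
move=> hj hk; rewrite /indb.
under eq_bigr do rewrite andbb -mulnb natrM.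
rewrite -mulr_suml sum_ind.
case: (boolP (j * k == 0)) => hjk; last by rewrite mulr0.
have -> : (2 * j + k < dA)%N = true by apply/idP; move/eqP: hjk => hjk; nia.
by rewrite mulr1.
Qed.

End Counter.

Section Counter2.
Variable C : numClosedFieldType.
Variables (dA : nat) (h3 : (3 <= dA)%N).

Let psi := cpsi C dA.

Lemma sqrt_r2 (x : C) : 0 <= x -> sqrtC (rr C ^+ 2 * x) = rr C * sqrtC x.
Proof.
move=> x0; rewrite sqrtCM ?nnegrE ?exprn_ge0 ?rr_ge0 //.
by rewrite sqrCK // rr_ge0.
Qed.

Lemma tnA : trace_norm (ptransposeX (pure_dm (vec_A_CB psi))) = 3%:R.
Proof.
rewrite (tn_diag (psi := vec_A_CB psi)); last first.
  move=> y y'; case: (mxtens_indexP y) => k j; case: (mxtens_indexP y') => k2 j2 hne.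
  rewrite -/(KA psi) KtKA; apply: big1 => i _; rewrite !phi_cpsi ff_mul /=.
  case: (boolP (_ && _)) => [/andP[e1 e2]|_]; last by rewrite mulr0.
  have [ej ek] := indb_off (ltn_ord k) (ltn_ord k2) e1 e2.
  by move: hne; rewrite (val_inj ej) (val_inj ek) eqxx.
rewrite sum_tens.
have e : forall (k j : 'I_2), sqrtC ((adjmx (KA psi) *m KA psi) (mxtens_index (k, j))
   (mxtens_index (k, j))) = rr C * ((j * k == 0)%N : nat)%:R.
  move=> k j; rewrite KtKA; under eq_bigr do rewrite !phi_cpsi ff_mul /=.
  rewrite -mulr_sumr sum_diag // sqrt_r2 ?ler0n //.
  by case: (_ == _); rewrite /= ?sqrtC1 ?sqrtC0.
under eq_bigr do under eq_bigr do rewrite e.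
rewrite !big_ord_recr !big_ord0 /= !add0r !mulr1 !mulr0 !addr0.
have -> : rr C + rr C + rr C = 3%:R * rr C by rewrite -[in RHS]natr1 -[2%N]/(1 + 1)%N natrD; ring.
by rewrite exprMn rr2 expr2 mulfK // pnatr_eq0.
Qed.

Lemma tnB : trace_norm (ptransposeX (pure_dm (vec_AC_B psi))) =
  (rr C * (sqrtC 2%:R + 1)) ^+ 2.
Proof.
rewrite (tn_diag (psi := vec_AC_B psi)); last first.
  move=> j j2 hne.
  rewrite -/(KB psi) KtKB; apply: big1 => i _; apply: big1 => k _.
  rewrite !phi_cpsi ff_mul /=.
  case: (boolP (_ && _)) => [/andP[e1 e2]|_]; last by rewrite mulr0.
  have [ej ek] := indb_off (ltn_ord k) (ltn_ord k) e1 e2.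
  by move: hne; rewrite (val_inj ej) eqxx.
have e : forall j : 'I_2, sqrtC ((adjmx (KB psi) *m KB psi) j j) =
    rr C * sqrtC (\sum_(k < 2) ((j * k == 0)%N : nat)%:R).
  move=> j; rewrite KtKB exchange_big /=.
  under eq_bigr do under eq_bigr do rewrite !phi_cpsi ff_mul /=.
  under eq_bigr do rewrite -mulr_sumr sum_diag //.
  by rewrite -mulr_sumr sqrt_r2 // sumr_ge0 // => k _; rewrite ler0n.
under eq_bigr do rewrite e.
rewrite !big_ord_recr !big_ord0 /= !add0r addr0 sqrtC1 -mulrDr.
by rewrite -[1 + 1]/(2%:R).
Qed.

Lemma tnC : trace_norm (ptransposeX (pure_dm (vec_AB_C psi))) =
  (rr C * (sqrtC 2%:R + 1)) ^+ 2.
Proof.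
rewrite (tn_diag (psi := vec_AB_C psi)); last first.
  move=> k k2 hne.
  rewrite -/(KC psi) KtKC; apply: big1 => i _; apply: big1 => j _.
  rewrite !phi_cpsi ff_mul /=.
  case: (boolP (_ && _)) => [/andP[e1 e2]|_]; last by rewrite mulr0.
  have [ej ek] := indb_off (ltn_ord k) (ltn_ord k2) e1 e2.
  by move: hne; rewrite (val_inj ek) eqxx.
have e : forall k : 'I_2, sqrtC ((adjmx (KC psi) *m KC psi) k k) =
    rr C * sqrtC (\sum_(j < 2) ((j * k == 0)%N : nat)%:R).
  move=> k; rewrite KtKC exchange_big /=.
  under eq_bigr do under eq_bigr do rewrite !phi_cpsi ff_mul /=.
  under eq_bigr do rewrite -mulr_sumr sum_diag //.
  by rewrite -mulr_sumr sqrt_r2 // sumr_ge0 // => j _; rewrite ler0n.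
under eq_bigr do rewrite e.
rewrite !big_ord_recr !big_ord0 /= !add0r addr0 sqrtC1 -mulrDr.
by rewrite -[1 + 1]/(2%:R).
Qed.

End Counter2.

Section Counter3.
Variable C : numClosedFieldType.
Variables (dA : nat) (h3 : (3 <= dA)%N).

Let psi := cpsi C dA.

Lemma entA (k j : 'I_2) : (adjmx (KA psi) *m KA psi) (mxtens_index (k, j)) (mxtens_index (k, j))
   = rr C ^+ 2 * ((j * k == 0)%N : nat)%:R.
Proof.
rewrite KtKA; under eq_bigr do rewrite !phi_cpsi ff_mul /=.
by rewrite -mulr_sumr sum_diag.
Qed.

Lemma cpsi_unit : unit_vector psi.
Proof.
rewrite /unit_vector -nrmE -(nA_eq psi) mxtrace_mulC /mxtrace sum_tens.
under eq_bigr do under eq_bigr do rewrite entA.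
rewrite !big_ord_recr !big_ord0 /= !add0r !mulr1 !mulr0 !addr0 rr2.
rewrite -[RHS](@mulfV _ 3%:R) ?pnatr_eq0 //.
by rewrite -[3%:R]/((1 + 1 + 1)%:R) !natrD !mulrDl !mul1r.
Qed.

Lemma counterexample : unit_vector psi /\ N_AC_B psi + N_AB_C psi < N_A_CB psi.
Proof.
split; first exact: cpsi_unit.
rewrite /N_AC_B /N_AB_C /N_A_CB /negativity tnA // tnB // tnC //.
set s := sqrtC (2%:R : C).
have s2 : s ^+ 2 = 2%:R by rewrite sqrtCK.
have s0 : 0 <= s by rewrite sqrtC_ge0 ler0n.
clearbody s.
have -> : (rr C * (s + 1)) ^+ 2 = rr C ^+ 2 * (s ^+ 2 + s *+ 2 + 1) by ring.
rewrite rr2 s2 -splitr.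
have -> : ((3%:R - 1) / 2%:R : C) = 1.
  by rewrite -[3%:R]/((2 + 1)%:R) natrD addrK divff // pnatr_eq0.
rewrite ltrBlDr ltr_pdivrMl ?ltr0n // -subr_gt0.
have -> : (3%:R * (1 + 1) - (2%:R + s *+ 2 + 1) : C) = 3%:R - s *+ 2.
  by rewrite -[3%:R]/((1 + 2)%:R) -[2%:R]/((1 + 1)%:R) !natrD; ring.
rewrite subr_gt0 -ltr_sqr ?nnegrE ?mulrn_wge0 ?ler0n //.
have -> : (s *+ 2) ^+ 2 = (s ^+ 2) *+ 4 by ring.
by rewrite s2 -natrX -mulr_natr -natrM ltr_nat.
Qed.

End Counter3.

Theorem theorem1 (R : realType) (dA : nat) (hdA : (2 <= dA)%N) :
  (forall (dB dC : nat) (psi : 'cV[R[i]]_(dA * dB * dC)),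
      unit_vector psi -> N_A_CB psi <= N_AC_B psi + N_AB_C psi)
  <-> dA = 2%N.
Proof.
split.
- move=> H; case: (ltngtP dA 2) => // h3.
    by move: hdA; rewrite leqNgt h3.
  have [hu hlt] := @counterexample R[i] dA h3.
  have := le_lt_trans (H 2%N 2%N _ hu) hlt.
  by rewrite ltxx.
- move=> e; subst dA => dB dC psi hu.
  exact: qubit_direction.
Qed.
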